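(* Let $S$ be a reflective numerical semigroup with $\mathrm{g}(S)=g\ge1$ and $\mathrm{m}(S)=a$, and let $r\in\{1,\dots,a-1\}$ satisfy $g\equiv r\pmod a$. Then the minimal generating set $A$ of $S$ is \[ A=\begin{cases} \{a\}\cup\big(\{g+1,\dots,g+(a-1)\}\setminus\{g+(a-r)\}\big) & \text{if } g\not\equiv -1\pmod a,\\ \{a,\ 2g+1\}\cup\{g+2,\dots,g+(a-1)\} & \text{if } g\equiv -1\pmod a.\end{cases}\] Consequently the embedding dimension of $S$ is $a-1$ if $g\not\equiv-1\pmod a$ and $a$ if $g\equiv -1\pmod a$.
   Context: A numerical semigroup is a submonoid $S$ of $(\mathbb{N}_0,+)$ with finite complement. Its set of gaps is $\mathrm{H}(S)=\mathbb{N}_0\setminus S$, its genus is $\mathrm{g}(S)=\#\mathrm{H}(S)$, and its multiplicity $\mathrm{m}(S)$ is the smallest positive element of $S$. For $A\subseteq\mathbb{N}_0$, $\langle A\rangle$ denotes the set of finite $\mathbb{N}_0$-linear combinations of elements of $A$. The minimal generating set of $S$ is the unique inclusion-minimal $A$ with $S=\langle A\rangle$ (equivalently, a generating set in which no element is an $\mathbb{N}_0$-linear combination of the other elements); its cardinality is the embedding dimension of $S$. A numerical semigroup $S$ of genus $g\ge1$ is called reflective if for every $z\in\{0,1,\dots,g-1\}$ exactly one of $z$ and $z+g$ belongs to $S$. *)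

(* Defs.v *)
From mathcomp Require Import all_boot.
Set Implicit Arguments. Unset Strict Implicit. Unset Printing Implicit Defensive.

Definition card_is (A : pred nat) (k : nat) : Prop :=
  exists s : seq nat, [/\ uniq s, (forall x, (x \in s) = A x) & size s = k].

Definition numerical_semigroup (S : pred nat) : Prop :=
  [/\ S 0, (forall x y, S x -> S y -> S (x + y))
    & exists N, forall n, N <= n -> S n].

Definition gaps (S : pred nat) : pred nat := fun n => ~~ S n.

Definition genus_is (S : pred nat) (g : nat) : Prop := card_is (gaps S) g.

Definition multiplicity_is (S : pred nat) (a : nat) : Prop :=
  [/\ 0 < a, S a & forall x, 0 < x < a -> ~~ S x].

Inductive generated (A : pred nat) : nat -> Prop :=
  | gen0 : generated A 0
  | genS : forall a y, A a -> generated A y -> generated A (a + y).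

Definition generates (A : pred nat) (S : pred nat) : Prop :=
  forall x, S x <-> generated A x.

Definition minimal_generating_set (S A : pred nat) : Prop :=
  generates A S /\
  forall B : pred nat, (forall x, B x -> A x) -> generates B S ->
    forall x, A x -> B x.

Definition reflective (S : pred nat) (g : nat) : Prop :=
  1 <= g /\ forall z, z < g -> S z != S (z + g).

(* Main.v *)
Require Import Defs.
From mathcomp Require Import all_boot zify.
From Stdlib Require Import Classical.
Set Implicit Arguments. Unset Strict Implicit. Unset Printing Implicit Defensive.

Definition Irr (S : pred nat) x := [/\ S x, 0 < x &
  forall s t, 0 < s -> 0 < t -> S s -> S t -> x = s + t -> False].

Lemma gen_add (A : pred nat) x y : generated A x -> generated A y -> generated A (x + y).
Proof. elim=> [|b z Hb _ IH] Hy //. rewrite -addnA; apply: genS => //; exact: IH. Qed.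

Lemma gen_mono (A B : pred nat) x : generated A x -> (forall y, A y -> B y) -> generated B x.
Proof. elim=> [|b z Hb _ IH] H; first exact: gen0. apply: genS; [exact: H | exact: IH]. Qed.

Lemma gen_S (S A : pred nat) x : S 0 -> (forall x y, S x -> S y -> S (x+y)) ->
  (forall y, A y -> S y) -> generated A x -> S x.
Proof. move=> S0 Sadd HA; elim=> // b z Hb _ IH; exact: Sadd (HA _ Hb) IH. Qed.

Lemma S_gen_P (S P : pred nat) x : (forall y, P y <-> Irr S y) -> S x -> generated P x.
Proof.
move=> HP; elim/ltn_ind: x => x IH Sx.
case: (posnP x) => [->|xpos]; first exact: gen0.
case: (boolP (P x)) => Px; first by rewrite -[x]addn0; apply: genS => //; exact: gen0.
destruct (classic (exists s t, [/\ 0 < s, 0 < t, S s, S t & x = s + t])) as [[s [t [s0 t0 Ss St E]]]|Hn].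
  rewrite E; apply: gen_add; [apply: (IH s) | apply: (IH t)] => //; lia.
exfalso; move/negP: Px; apply; apply/HP; split => // s t s0 t0 Ss St E.
by apply: Hn; exists s, t.
Qed.

Lemma gen_irr_in (S A : pred nat) x : S 0 -> (forall x y, S x -> S y -> S (x+y)) ->
  (forall y, A y -> S y) -> generated A x -> Irr S x -> A x.
Proof.
move=> S0 Sadd HA; elim=> [|b z Hb Hz IH] [Sx xp Hd]; first by [].
case: (posnP b) => [b0|bp]; first by move: Sx xp Hd; rewrite b0 add0n => *; apply: IH; split.
case: (posnP z) => [z0|zp]; first by rewrite z0 addn0.
exfalso; apply: (Hd b z) => //; [exact: HA | exact: gen_S Hz].
Qed.

Lemma min_gen_iff (S P : pred nat) : S 0 -> (forall x y, S x -> S y -> S (x+y)) ->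
  (forall y, P y <-> Irr S y) ->
  forall A, minimal_generating_set S A <-> A =1 P.
Proof.
move=> S0 Sadd HP A; split.
- move=> [HG Hmin].
  have AS : forall y, A y -> S y.
    by move=> y Ay; apply/HG; rewrite -[y]addn0; apply: genS => //; exact: gen0.
  have PA : forall y, P y -> A y.
    move=> y /HP Iy; apply: (gen_irr_in S0 Sadd AS) => //; apply/HG; by case: Iy.
  have HB : generates (fun x => A x && P x) S.
    move=> x; split.
    + move=> Sx; apply: gen_mono (S_gen_P HP Sx) _ => y Py; by rewrite PA.
    + apply: gen_S => // y /andP[Ay _]; exact: AS.
  move=> x; apply/idP/idP; last exact: PA.
  move=> Ax; have HBA : forall y, A y && P y -> A y by move=> y /andP[].
  by have /andP[] := Hmin _ HBA HB x Ax.
- move=> HA.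
  have AS : forall y, A y -> S y by move=> y; rewrite HA => /HP [].
  split.
  + move=> x; split.
    * move=> Sx; apply: gen_mono (S_gen_P HP Sx) _ => y; by rewrite HA.
    * exact: gen_S.
  + move=> B HBA HB x Ax.
    have BS : forall y, B y -> S y by move=> y /HBA /AS.
    apply: (gen_irr_in S0 Sadd BS); first by apply/HB; exact: AS.
    by apply/HP; rewrite -HA.
Qed.

Lemma big_in (S : pred nat) g : genus_is S g -> reflective S g -> forall n, 2 * g <= n -> S n.
Proof.
move=> [s [us Es ss]] [g1 Hr] n Hn.
apply/negPn/negP => Sn.
pose f z := if S z then z + g else z.
have finj : {in iota 0 g &, injective f}.
  move=> z1 z2; rewrite !mem_iota /f => /andP[_ h1] /andP[_ h2].
  by case: (S z1); case: (S z2) => /=; lia.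
have Hsub : {subset map f (iota 0 g) <= s}.
  move=> y /mapP[z]; rewrite mem_iota => /andP[_ zg] ->; rewrite Es /gaps /f.
  rewrite add0n in zg; case Sz: (S z) => /=; last by rewrite Sz. by move: (Hr z zg); rewrite Sz; case: (S (z+g)).
have [_ eq] := uniq_min_size (etrans (map_inj_in_uniq finj) (iota_uniq 0 g)) Hsub
   ltac:(by rewrite size_map size_iota ss).
have : n \in s by rewrite Es.
rewrite -eq => /mapP[z]; rewrite mem_iota /f => /andP[_ zg]; case: (S z) => /=; lia.
Qed.

Lemma mult_k (S : pred nat) a k : S 0 -> (forall x y, S x -> S y -> S (x+y)) -> S a -> S (k * a).
Proof. move=> S0 Sadd Sa; elim: k => [|k IH] //; rewrite mulSn; exact: Sadd. Qed.

Lemma below_g (S : pred nat) g a : numerical_semigroup S -> multiplicity_is S a -> reflective S g ->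
  forall x, x < g -> S x = (a %| x).
Proof.
move=> [S0 Sadd _] [a0 Sa Hm] [g1 Hr].
have dc : forall x s, x < g -> S x -> S s -> s <= x -> S (x - s).
  move=> x s xg Sx Ss sx; apply/negPn/negP => N.
  have h1 := Hr _ xg; rewrite Sx in h1.
  have h2 := Hr (x - s) ltac:(lia). rewrite (negbTE N) in h2.
  have := Sadd _ _ (negPn h2 : S (x - s + g)) Ss.
  have -> : x - s + g + s = x + g by lia.
  by move: h1; case: (S (x + g)).
elim/ltn_ind => x IH xg; apply/idP/idP.
- move=> Sx; case: (posnP x) => [->|xp]; first by rewrite dvdn0.
  case: (ltnP x a) => xa; first by move: (Hm x); rewrite xp xa Sx => /(_ isT).
  have := IH (x - a) ltac:(lia) ltac:(lia); rewrite (dc x a) // => /esym h.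
  by rewrite -(subnK xa); apply: dvdn_add.
- by move=> /dvdnP[k ->]; exact: mult_k.
Qed.

Lemma mid_g (S : pred nat) g a : numerical_semigroup S -> multiplicity_is S a -> reflective S g ->
  forall n, g <= n < 2 * g -> S n = ~~ (a %| n - g).
Proof.
move=> HS Hm Hrf n Hn.
have := (proj2 Hrf) (n - g) ltac:(lia).
have -> : n - g + g = n by lia.
rewrite (below_g HS Hm Hrf (x := n - g)); last by lia.
by case: (a %| n - g); case: (S n).
Qed.

Ltac cleardv := repeat match goal with H : context [dvdn _ _] |- _ => clear H end.
Ltac slia := cleardv; lia.

Definition Xdef (g a r : nat) : pred nat :=
    if (g + 1) %% a != 0 then
      fun x => (x == a) || ((g + 1 <= x <= g + (a - 1)) && (x != g + (a - r)))
    else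
      fun x => [|| x == a, x == 2 * g + 1 | g + 2 <= x <= g + (a - 1)].

Section K.
Variables (a g r : nat).
Hypotheses (a2 : 2 <= a) (r1 : 1 <= r < a) (rg : r <= g) (agr : a %| g - r).

Lemma D1 y : 0 < y < a -> ~~ (a %| y).
Proof. move=> h; apply/negP => /(dvdn_leq) h2; have := h2 ltac:(slia); slia. Qed.

Lemma D0 m : a %| m -> m < a -> m = 0.
Proof. move=> /dvdnP[k ->] h; cleardv; case: k h => // k h; nia. Qed.

Lemma D4 m : a %| m -> 0 < m < 2 * a -> m = a.
Proof. move=> /dvdnP[k ->] h; cleardv; case: k h => [|[|k]] h; nia. Qed.

Lemma D2 y : (a %| g + y) = (a %| r + y).
Proof.
have -> : g + y = (g - r) + (r + y) by slia.
by rewrite dvdn_addr.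
Qed.

Lemma Hc : ((g + 1) %% a != 0) = (r + 1 != a).
Proof.
have : (a %| g + 1) = (r + 1 == a).
  rewrite D2; apply/idP/eqP; last by move->.
  move=> h; apply: D4 => //; slia.
by rewrite /dvdn => ->.
Qed.

Lemma XA : Xdef g a r a.
Proof. by rewrite /Xdef; case: ifP => _ /=; rewrite eqxx. Qed.

Lemma XR x : g + 1 <= x <= g + a - 1 -> x != g + a - r -> (r + 1 = a -> g + 2 <= x) ->
  Xdef g a r x.
Proof. rewrite /Xdef Hc; case: (eqVneq (r + 1) a) => E /= *; slia. Qed.

Lemma X2 x : r + 1 = a -> x = 2 * g + 1 -> Xdef g a r x.
Proof. rewrite /Xdef Hc => E ->; rewrite E eqxx /=; slia. Qed.

Lemma Xchar x : Xdef g a r x ->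
  x = a \/ (g + 1 <= x <= g + a - 1 /\ x <> g + a - r) \/ (r + 1 = a /\ x = 2 * g + 1).
Proof. rewrite /Xdef Hc; case: (eqVneq (r + 1) a) => E /= *; slia. Qed.


Variable S : pred nat.
Hypotheses (Sadd : forall x y, S x -> S y -> S (x + y)) (Hm : forall x, 0 < x < a -> ~~ S x)
  (Sa : S a) (Sb : forall n, n < g -> S n = (a %| n))
  (Sm : forall n, g <= n < 2 * g -> S n = ~~ (a %| n - g))
  (Sbig : forall n, 2 * g <= n -> S n) (g1 : 1 <= g) (ag : a <= g + 1).

Lemma shape s : S s -> 0 < s -> (s < g /\ a %| s /\ a <= s) \/ g + 1 <= s.
Proof.
move=> Ss s0; case: (ltnP s g) => sg.
  have ds : a %| s by rewrite -Sb.
  by left; split; [|split; [|exact: dvdn_leq]].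
right; case: (eqVneq s g) => [E|]; last by move=> *; slia.
by move: Ss; rewrite Sm E ?subnn ?dvdn0 //; slia.
Qed.

Lemma Sg1 : S (g + 1).
Proof.
case: (ltnP (g + 1) (2 * g)) => h; last by apply: Sbig.
rewrite Sm; last by slia.
rewrite (_ : g + 1 - g = 1); last by slia.
apply: D1; slia.
Qed.

Lemma fwd x : Xdef g a r x -> Irr S x.
Proof.
case/Xchar => [->|[[h1 h2]|[E ->]]].
- split; [done|slia|] => s t s0 t0 Ss St E.
  by move: (@Hm s ltac:(slia)); rewrite Ss.
- split; [|slia|].
  + case: (ltnP x (2 * g)) => h; last by apply: Sbig.
    rewrite Sm; last by slia.
    apply: D1; slia.
  + move=> s t s0 t0 Ss St E.
    case: (shape Ss s0) => [[hs [ds as_]]|hs]; case: (shape St t0) => [[ht [dt at_]]|ht]; try slia.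
    have : a %| s + t by apply: dvdn_add.
    rewrite -E (_ : x = g + (x - g)); last by slia.
    rewrite D2 => /D4 h; have := h ltac:(slia); slia.
- have ag1 : a %| g + 1 by rewrite D2 E.
  have side : forall s t, s < g -> a %| s -> a <= s -> g + 1 <= t -> S t -> s + t = 2 * g + 1 -> False.
    move=> s t sg ds as_ ht St Est.
    case: (ltnP t (2 * g)) => h; last by slia.
    move: St; rewrite Sm; last by slia.
    rewrite (_ : t - g = g + 1 - s); last by slia.
    by rewrite dvdn_sub.
  split; [by apply: Sbig; slia|slia|].
  move=> s t s0 t0 Ss St Est.
  case: (shape Ss s0) => [[hs [ds as_]]|hs]; case: (shape St t0) => [[ht [dt at_]]|ht]; try slia.
  + exact: (side s t _ _ _ _ _ (esym Est)).
  + by apply: (side t s) => //; rewrite addnC Est.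
Qed.

Lemma bwd x : Irr S x -> Xdef g a r x.
Proof.
case=> Sx x0 D.
have da : a < x -> S (x - a) -> False.
  move=> h Sxa; apply: (D a (x - a)) => //; slia.
case: (ltnP x g) => xg.
  have dx : a %| x by rewrite -Sb.
  case: (eqVneq x a) => [->|xa]; first exact: XA.
  exfalso; apply: da; first by have := dvdn_leq x0 dx; slia.
  rewrite Sb; last by slia.
  by apply: dvdn_sub.
case: (ltnP x (2 * g)) => x2g.
  have ndx : ~~ (a %| x - g) by rewrite -Sm //; slia.
  case: (ltnP (x - g) a) => hxa.
    have xg0 : x - g != 0 by apply: contraNneq ndx => ->.
    case: (eqVneq x (g + a - r)) => [Ex|Nx].
      case: (eqVneq x a) => [->|xa]; first exact: XA.
      exfalso; apply: da; first by slia.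
      rewrite (_ : x - a = g - r); last by slia.
      by rewrite Sb //; slia.
    apply: XR => //; slia.
  exfalso; apply: da; first by slia.
  rewrite Sm; last by slia.
  apply: contra ndx => h.
  rewrite (_ : x - g = (x - a - g) + a); last by slia.
  by apply: dvdn_add.
case: (boolP (a %| x - g)) => dxg.
  case: (leqP (2 * g) (x - a)) => h.
    by exfalso; apply: da; [slia | apply: Sbig].
  have : a %| (x - g) - (g - r) by apply: dvdn_sub.
  move=> /D4 h2; have {h2} h2 := h2 ltac:(slia).
  case: (eqVneq (r + 1) a) => [E|E].
    apply: X2 => //; slia.
  exfalso; apply: (D (g + 1) (g + a - r - 1)); [slia|slia|exact: Sg1| |slia].
  rewrite Sm; last by slia.
  apply: D1; slia.
case: (leqP g (x - a)) => h.
  exfalso; apply: da; first by slia.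
  case: (ltnP (x - a) (2 * g)) => h3; last by apply: Sbig.
  rewrite Sm; last by slia.
  apply: contra dxg => h4.
  rewrite (_ : x - g = (x - a - g) + a); last by slia.
  by apply: dvdn_add.
have Er : g - r = 0 by apply: D0 => //; slia.
case: (eqVneq x a) => [->|xa]; first exact: XA.
apply: XR => //; slia.
Qed.

End K.

Theorem mainTheorem4 (S : pred nat) (g a r : nat) :
  numerical_semigroup S ->
  genus_is S g ->
  multiplicity_is S a ->
  reflective S g ->
  1 <= r <= a - 1 ->
  g %% a = r ->
  let X : pred nat :=
    if (g + 1) %% a != 0 then
      fun x => (x == a) || ((g + 1 <= x <= g + (a - 1)) && (x != g + (a - r)))
    else
      fun x => [|| x == a, x == 2 * g + 1 | g + 2 <= x <= g + (a - 1)] in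
  (forall A : pred nat, minimal_generating_set S A <-> A =1 X) /\
  (forall A : pred nat, minimal_generating_set S A ->
     card_is A (if (g + 1) %% a != 0 then a - 1 else a)).
Proof.
move=> HS Hg Hm Hrf hr Hmod X.
have HS' := HS; case: HS' => [S0 Sadd _].
have Hm' := Hm; case: Hm' => [a0 Sa Hmu].
have g1 : 1 <= g by case: Hrf.
have a2 : 2 <= a by slia.
have r1 : 1 <= r < a by slia.
have rg : r <= g by rewrite -Hmod leq_mod.
have agr : a %| g - r.
  apply/dvdnP; exists (g %/ a).
  by rewrite -Hmod {1}(divn_eq g a) addnK.
have Sb := below_g HS Hm Hrf.
have Sm := mid_g HS Hm Hrf.
have Sbig := big_in Hg Hrf.
have ag : a <= g + 1.
  rewrite leqNgt; apply/negP => h.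
  have := @Hmu (g + 1) ltac:(slia).
  case: (ltnP (g + 1) (2 * g)) => h2; last by rewrite Sbig.
  rewrite Sm; last by slia.
  rewrite (_ : g + 1 - g = 1); last by slia.
  by rewrite dvdn1; case: eqP => // E; move: a2; rewrite E.
have HP : forall y, X y <-> Irr S y.
  move=> y; split.
  - exact: (fwd a2 r1 rg agr Hmu Sa Sb Sm Sbig g1 ag).
  - exact: (bwd a2 r1 rg agr Sa Sb Sm Sbig g1 ag).
have MG := min_gen_iff S0 Sadd HP.
split => // A /MG HA.
have hc := Hc a2 r1 rg agr.
rewrite hc; case: (eqVneq (r + 1) a) => E /=.
- exists [:: a, 2 * g + 1 & iota (g + 2) (a - 2)]; split.
  + rewrite /= !inE !mem_iota iota_uniq andbT; slia.
  + move=> y; rewrite HA /X hc E eqxx /= !inE mem_iota.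
    apply/idP/idP; slia.
  + rewrite /= size_iota; slia.
- have ag' : a <= g.
    case: (leqP a g) => // h; have Z : g - r = 0 by apply: (@D0 a g r) => //; slia.
    slia.
  exists (a :: iota (g + 1) (a - r - 1) ++ iota (g + a - r + 1) (r - 1)); split.
  + rewrite /= cat_uniq !iota_uniq mem_cat !mem_iota /= andbT; apply/andP; split; first slia.
    apply/hasPn => y; rewrite !mem_iota; slia.
  + move=> y; rewrite HA /X hc E /= inE mem_cat !mem_iota.
    apply/idP/idP; slia.
  + rewrite /= size_cat !size_iota; slia.
Qed.
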